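(* In the peer prediction mechanism, for every $n\ge 2$ and every strictly proper scoring rule $PS$, the truthful profile $\Sigma^*$ is an ex-ante Bayesian $k_E$-strong equilibrium. Here $$k_E^h=\begin{cases}\left\lfloor \dfrac{(n-1)\,\mathbb E_{s\sim P_\ell}[PS(s,P_\ell)-PS(s,P_h)]}{PS(h,P_h)-PS(\ell,P_h)}\right\rfloor+1 & \text{if } PS(h,P_h)>PS(\ell,P_h),\\ n&\text{otherwise,}\end{cases}$$ $$k_E^\ell=\begin{cases}\left\lfloor \dfrac{(n-1)\,\mathbb E_{s\sim P_h}[PS(s,P_h)-PS(s,P_\ell)]}{PS(\ell,P_\ell)-PS(h,P_\ell)}\right\rfloor+1 & \text{if } PS(\ell,P_\ell)>PS(h,P_\ell),\\ n&\text{otherwise,}\end{cases}$$ and $k_E=\min(k_E^h,k_E^\ell,n)$. Moreover, for every integer $k$ with $k_E<k\le n$, $\Sigma^*$ is not an ex-ante Bayesian $k$-strong equilibrium.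
   Context: Peer prediction setting. There are $n\ge 2$ agents $[n]$. Each agent $i$ privately observes a signal $\Psi_i\in\{\ell,h\}$ and reports $r_i\in\{\ell,h\}$. Signals are drawn from a common prior $Q$ on $\{\ell,h\}^n$ that is symmetric, i.e., invariant under permutations of the agents. $P(s)$ denotes the marginal probability that an agent has signal $s$. $P(s\mid s')$ denotes the probability that another agent $j\ne i$ has signal $s$ given that agent $i$ has signal $s'$. $P_{s'}=P(\cdot\mid s')$ is the corresponding distribution on $\{\ell,h\}$. Standing assumptions: $P(\ell),P(h)>0$, $P(h\mid h)>P(h\mid\ell)$, $P(h\mid\ell)>0$ and $P(\ell\mid h)>0$. A scoring rule $PS:\{\ell,h\}\times\Delta_{\{\ell,h\}}\to\mathbb R$ is strictly proper if $\mathbb E_{s\sim p}[PS(s,p)]>\mathbb E_{s\sim p}[PS(s,q)]$ for all distributions $p\ne q$. The mechanism gives agent $i$ the utility $v_i=\frac1{n-1}\sum_{j\ne i}PS(r_j,P_{r_i})$. A strategy is a pair $\sigma=(\beta_\ell,\beta_h)\in[0,1]^2$, where $\beta_\ell$ and $\beta_h$ are the probabilities of reporting $h$ given signal $\ell$ and signal $h$, respectively. Given signals, reports are drawn independently. The truthful strategy is $(0,1)$, and $\Sigma^*$ is the profile in which all agents play it. The ex-ante utility $u_i(\Sigma)$ is the expectation of $v_i$. The interim utility $u_i(\Sigma\mid s)$ is its expectation conditioned on $\Psi_i=s$. A profile $\Sigma$ is an ex-ante Bayesian $k$-strong equilibrium if there is no set $D\subseteq[n]$ with $|D|\le k$ and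 no profile $\Sigma'$ such that: (1) agents outside $D$ keep their strategies from $\Sigma$; (2) $u_i(\Sigma')\ge u_i(\Sigma)$ for all $i\in D$; and (3) $u_i(\Sigma')>u_i(\Sigma)$ for some $i\in D$. *)

(* Defs.v *)
From HB Require Import structures.
From mathcomp Require Import all_boot all_order fingroup perm all_algebra.
From mathcomp Require Import reals.
Set Implicit Arguments. Unset Strict Implicit. Unset Printing Implicit Defensive.
Import Order.TTheory GRing.Theory Num.Theory.
Local Open Scope ring_scope.

(* Conventions: signal/report [true] = h, [false] = l.
   A distribution on {l,h} is represented by its probability of h, a real in [0,1]. *)

Section PeerPrediction.
Variable R : realType.
Variable n : nat.
Hypothesis Hn : (1 < n)%N.

Definition signals := {ffun 'I_n -> bool}.

(* two distinct reference agents, 0 and 1 (the prior is symmetric, so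
   any pair of distinct agents gives the same marginals/conditionals) *)
Definition agent0 : 'I_n := Ordinal (ltnW Hn).
Definition agent1 : 'I_n := Ordinal Hn.

Definition symmetric_prior (Q : signals -> R) : Prop :=
  [/\ forall w, 0 <= Q w,
      \sum_w Q w = 1 &
      forall (pi : {perm 'I_n}) (w : signals), Q [ffun i => w (pi i)] = Q w].

Definition Pmarg (Q : signals -> R) (s : bool) : R :=
  \sum_(w : signals | w agent0 == s) Q w.

Definition Pcond (Q : signals -> R) (s s' : bool) : R :=
  (\sum_(w : signals | (w agent0 == s') && (w agent1 == s)) Q w) / Pmarg Q s'.

(* P_{s'} as a distribution on {l,h}: its probability of h *)
Definition Pdist (Q : signals -> R) (s' : bool) : R := Pcond Q true s'.

Definition Exp (p : R) (f : bool -> R) : R := p * f true + (1 - p) * f false.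

Definition is_dist (p : R) : Prop := 0 <= p <= 1.

Definition strictly_proper (PS : bool -> R -> R) : Prop :=
  forall p q : R, is_dist p -> is_dist q -> p != q ->
    Exp p (fun s => PS s p) > Exp p (fun s => PS s q).

(* A strategy (beta_l, beta_h): probabilities of reporting h given l, resp. h *)
Definition strategy := (R * R)%type.
Definition valid_strategy (b : strategy) : Prop := is_dist b.1 /\ is_dist b.2.
Definition profile := 'I_n -> strategy.
Definition valid_profile (S : profile) : Prop := forall i, valid_strategy (S i).

Definition truthful : strategy := (0, 1).
Definition truthful_profile : profile := fun _ => truthful.

Definition prob_h (b : strategy) (s : bool) : R := if s then b.2 else b.1.

Definition report_prob (S : profile) (w r : signals) : R :=
  \prod_j (if r j then prob_h (S j) (w j) else 1 - prob_h (S j) (w j)).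

Definition payment (Q : signals -> R) (PS : bool -> R -> R) (i : 'I_n) (r : signals) : R :=
  (n.-1)%:R^-1 * \sum_(j | j != i) PS (r j) (Pdist Q (r i)).

Definition exante_utility (Q : signals -> R) (PS : bool -> R -> R)
    (S : profile) (i : 'I_n) : R :=
  \sum_(w : signals) Q w * \sum_(r : signals) report_prob S w r * payment Q PS i r.

Definition kstrong_eq (Q : signals -> R) (PS : bool -> R -> R) (S : profile) (k : int) : Prop :=
  ~ exists (D : {set 'I_n}) (S' : profile),
      [/\ (#|D|%:Z <= k), valid_profile S',
          (forall i, i \notin D -> S' i = S i),
          (forall i, i \in D -> exante_utility Q PS S' i >= exante_utility Q PS S i) &
          (exists2 i, i \in D & exante_utility Q PS S' i > exante_utility Q PS S i)].

Definition kE_h (Q : signals -> R) (PS : bool -> R -> R) : int :=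
  let Pl := Pdist Q false in let Ph := Pdist Q true in
  if PS true Ph > PS false Ph then
    Num.floor ((n.-1)%:R * Exp Pl (fun s => PS s Pl - PS s Ph)
               / (PS true Ph - PS false Ph)) + 1
  else n%:Z.

Definition kE_l (Q : signals -> R) (PS : bool -> R -> R) : int :=
  let Pl := Pdist Q false in let Ph := Pdist Q true in
  if PS false Pl > PS true Pl then
    Num.floor ((n.-1)%:R * Exp Ph (fun s => PS s Ph - PS s Pl)
               / (PS false Pl - PS true Pl)) + 1
  else n%:Z.

Definition kE (Q : signals -> R) (PS : bool -> R -> R) : int :=
  Num.min (kE_h Q PS) (Num.min (kE_l Q PS) n%:Z).

End PeerPrediction.

(* Main.v *)
Require Import Defs.
From HB Require Import structures.
From mathcomp Require Import all_boot all_order fingroup perm all_algebra.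
From mathcomp Require Import reals.
From mathcomp Require Import ring lra.
Import Order.TTheory GRing.Theory Num.Theory.
Local Open Scope ring_scope.
Set Implicit Arguments. Unset Strict Implicit. Unset Printing Implicit Defensive.

Lemma perm_exists n (i j a b : 'I_n) : i != j -> a != b ->
  exists s : {perm 'I_n}, s i = a /\ s j = b.
Proof.
move=> hij hab.
exists (tperm i a * tperm (tperm i a j) b)%g; rewrite !permM.
split; last by rewrite (tpermL (tperm i a j)).
rewrite (tpermL i a) (@tpermD _ (tperm i a j)) //.
  apply/eqP=> e; move: hij.
  have e2 : tperm i a j = tperm i a i by rewrite tpermL.
  by rewrite (perm_inj e2) eqxx.
by rewrite eq_sym.
Qed.

Lemma K1 (R : realType) (n d : nat) (A B D q : R) : (0 < d)%N -> 0 <= D -> 0 <= q -> (0 < n)%N ->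
  d%:Z <= (if B < A then Num.floor ((n.-1)%:R * D / (A - B)) + 1 else n%:Z) ->
  (d%:R - 1) * (q * Num.max (A - B) 0) <= (n%:R - 1) * (q * D).
Proof.
move=> d0 D0 q0 n0.
have n1 : 0 <= n%:R - 1 :> R by rewrite subr_ge0 ler1n.
have eqn : (n.-1)%:R = n%:R - 1 :> R by rewrite -{2}(prednK n0) mulrSr addrK.
case: ltP => hAB hd.
  rewrite max_l; last by rewrite subr_ge0 ltW.
  have : d%:Z - 1 <= Num.floor ((n.-1)%:R * D / (A - B)) by rewrite lerBlDr.
  rewrite floor_ge_int intrD /= ler_pdivlMr ?subr_gt0 // eqn => h.
  have e : (d%:Z%:~R : R) + (-1)%:~R = d%:R - 1 by [].
  rewrite e in h.
  have := ler_wpM2l q0 h => h2.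
  by rewrite mulrCA [X in _ <= X]mulrCA.
rewrite max_r ?subr_le0 // !mulr0; apply: mulr_ge0 => //; exact: mulr_ge0.
Qed.

Lemma K2 (R : realType) (n : nat) (A B D q : R) : B < A -> 0 <= D -> 0 < q -> (0 < n)%N ->
  exists d : nat, [/\ (0 < d)%N,
    d%:Z = Num.floor ((n.-1)%:R * D / (A - B)) + 1 + 1 &
    (n%:R - 1) * (q * D) < (d%:R - 1) * (q * (A - B))].
Proof.
move=> hAB D0 q0 n0.
have eqn : (n.-1)%:R = n%:R - 1 :> R by rewrite -{2}(prednK n0) mulrSr addrK.
set X := (n.-1)%:R * D / (A - B).
have X0 : 0 <= X.
  rewrite /X divr_ge0 ?subr_ge0 ?(ltW hAB) // mulr_ge0 // eqn subr_ge0 ler1n //.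
set m := Num.floor X.
have m0 : 0 <= m by rewrite /m floor_ge0.
exists (`|m|%N.+2); split => //.
  by rewrite -addn2 PoszD gez0_abs // -addrA.
have hX := floorD1_gt X.
rewrite ltr_pdivrMr ?subr_gt0 // eqn -/m in hX.
have e : (`|m|%N.+2)%:R - 1 = (m + 1)%:~R :> R.
  rewrite intrD -[m]gez0_abs // -addn2 natrD /=.
  rewrite -pmulrn; ring.
rewrite e.
have := ltr_pM2l q0 _ _; move=> h.
rewrite mulrCA [X in _ < X]mulrCA; rewrite ltr_pM2l //.
Qed.

Lemma eqT (T : eqType) (x : T) : (x == x) = true.
Proof. exact: eqxx. Qed.

Section S.
Variable R : realType.
Variable n : nat.
Hypothesis Hn : (1 < n)%N.
Variable Q : signals n -> R.
Hypothesis HQ : symmetric_prior Q.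

Lemma sym_pair (i j : 'I_n) (h : bool -> bool -> R) : i != j ->
  \sum_w Q w * h (w i) (w j) = \sum_w Q w * h (w (agent0 Hn)) (w (agent1 Hn)).
Proof.
move=> hij.
have a01 : agent0 Hn != agent1 Hn by [].
have [s [si sj]] := perm_exists hij a01.
case: HQ => _ _ Hp.
pose f (w : signals n) : signals n := [ffun k => w (s k)].
have finj : injective f.
  move=> w1 w2 e; apply/ffunP=> k.
  have := congr1 (fun w : signals n => w (s^-1 k)%g) e; rewrite /f !ffunE.
  by rewrite permKV.
rewrite (reindex_inj finj); apply: eq_bigr => w _.
by rewrite /f Hp !ffunE si sj.
Qed.

Definition pr (b : strategy R) (s a : bool) : R := if a then prob_h b s else 1 - prob_h b s.

Lemma report_key (S : profile R n) (w : signals n) (i j : 'I_n) (a b : bool) : i != j ->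
  \sum_r report_prob S w r * ((r i == a) && (r j == b))%:R =
  pr (S i) (w i) a * pr (S j) (w j) b.
Proof.
move=> hij.
have hji : (j == i) = false by rewrite eq_sym (negbTE hij).
pose F (k : 'I_n) (c : bool) := pr (S k) (w k) c *
  (if k == i then (c == a)%:R else if k == j then (c == b)%:R else 1 : R).
have e1 : forall r : signals n, report_prob S w r * ((r i == a) && (r j == b))%:R
   = \prod_k F k (r k).
  move=> r; rewrite /F big_split /=; congr (_ * _).
  rewrite (bigD1 i) //= (bigD1 j) /=; last by rewrite eq_sym.
  rewrite (eqT i) (eqT j) hji big1 ?mulr1.
    by case: (r i == a); case: (r j == b); rewrite /= ?mul1r ?mul0r.
  by move=> k /andP[/negbTE -> /negbTE ->].
rewrite (eq_bigr (fun r : signals n => \prod_k F k (r k))); last by move=> r _; apply: e1.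
rewrite -bigA_distr_bigA.
rewrite (bigD1 i) //= (bigD1 j) /=; last by rewrite eq_sym.
rewrite [\prod_(_ | _) _]big1 ?mulr1.
  rewrite !big_bool /F /=.
  rewrite (eqT i) (eqT j) hji.
  by rewrite /pr; clear e1 F; case: a; case: b => /=; ring.
move=> k /andP[/negbTE ki /negbTE kj]; rewrite big_bool /F ki kj /pr /=; ring.
Qed.

Lemma report_pair (S : profile R n) (w : signals n) (i j : 'I_n) (g : bool -> bool -> R) :
  i != j ->
  \sum_r report_prob S w r * g (r i) (r j) =
  \sum_a \sum_b pr (S i) (w i) a * pr (S j) (w j) b * g a b.
Proof.
move=> hij.
have e : forall r : signals n, report_prob S w r * g (r i) (r j) =
  \sum_a \sum_b report_prob S w r * ((r i == a) && (r j == b))%:R * g a b.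
  move=> r; rewrite !big_bool; case: (r i); case: (r j) => /=; ring.
rewrite (eq_bigr _ (fun r _ => e r)) exchange_big; apply: eq_bigr => a _.
rewrite exchange_big; apply: eq_bigr => b _.
by rewrite -mulr_suml report_key.
Qed.

Definition qq (s s' : bool) : R :=
  \sum_(w : signals n | (w (agent0 Hn) == s) && (w (agent1 Hn) == s')) Q w.

Lemma pair_expand (h : bool -> bool -> R) :
  \sum_w Q w * h (w (agent0 Hn)) (w (agent1 Hn)) = \sum_s \sum_s' qq s s' * h s s'.
Proof.
have e : forall w : signals n, Q w * h (w (agent0 Hn)) (w (agent1 Hn)) =
  \sum_s \sum_s' (if (w (agent0 Hn) == s) && (w (agent1 Hn) == s') then Q w else 0) * h s s'.
  move=> w; rewrite !big_bool.
  by case: (w (agent0 Hn)); case: (w (agent1 Hn)) => /=; rewrite ?mul0r ?addr0 ?add0r.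
rewrite (eq_bigr _ (fun w _ => e w)) exchange_big; apply: eq_bigr => s _.
rewrite exchange_big; apply: eq_bigr => s' _.
by rewrite -mulr_suml /qq [X in _ = X * _]big_mkcond.
Qed.

Variable PS : bool -> R -> R.

Definition Gf (u v : strategy R) : R :=
  \sum_s \sum_s' qq s s' * \sum_a \sum_b pr u s a * pr v s' b * PS b (Pdist Hn Q a).

Lemma util (S : profile R n) (i : 'I_n) :
  exante_utility Hn Q PS S i = (n.-1)%:R^-1 * \sum_(j | j != i) Gf (S i) (S j).
Proof.
rewrite /exante_utility /payment.
have e1 : forall w : signals n, Q w * \sum_r report_prob S w r *
   ((n.-1)%:R^-1 * \sum_(j | j != i) PS (r j) (Pdist Hn Q (r i))) =
   (n.-1)%:R^-1 * \sum_(j | j != i) (Q w * \sum_r report_prob S w r * PS (r j) (Pdist Hn Q (r i))).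
  move=> w.
  have -> : \sum_r report_prob S w r *
     ((n.-1)%:R^-1 * \sum_(j | j != i) PS (r j) (Pdist Hn Q (r i))) =
     (n.-1)%:R^-1 * \sum_(j | j != i) \sum_r report_prob S w r * PS (r j) (Pdist Hn Q (r i)).
    rewrite exchange_big /= mulr_sumr; apply: eq_bigr => r _.
    by rewrite mulrCA mulr_sumr.
  by rewrite mulrCA mulr_sumr.
rewrite (eq_bigr _ (fun w _ => e1 w)) -mulr_sumr exchange_big /=; congr (_ * _).
apply: eq_bigr => j hj.
have hij : i != j by rewrite eq_sym.
rewrite (eq_bigr (fun w : signals n => Q w * \sum_a \sum_b pr (S i) (w i) a * pr (S j) (w j) b * PS b (Pdist Hn Q a))); last first.
  by move=> w _; rewrite (report_pair S w (fun a b => PS b (Pdist Hn Q a)) hij).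
rewrite (sym_pair (fun s s' => \sum_a \sum_b pr (S i) s a * pr (S j) s' b * PS b (Pdist Hn Q a)) hij).
exact: (pair_expand (fun s s' => \sum_a \sum_b pr (S i) s a * pr (S j) s' b * PS b (Pdist Hn Q a))).
Qed.

Definition Ah := PS true (Pdist Hn Q true).
Definition Bh := PS false (Pdist Hn Q true).
Definition Al := PS true (Pdist Hn Q false).
Definition Bl := PS false (Pdist Hn Q false).

Definition Lf (u : strategy R) : R :=
  u.1 * (qq false true * (Al - Ah) + qq false false * (Bl - Bh)) +
  (1 - u.2) * (qq true true * (Ah - Al) + qq false true * (Bh - Bl)).

Definition Bf (v : strategy R) : R :=
  v.1 * (qq false false + qq false true) * Num.max (Ah - Bh) 0 +
  (1 - v.2) * (qq false true + qq true true) * Num.max (Bl - Al) 0.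

Hypothesis hsym : qq true false = qq false true.

Lemma I1 u : Gf u (truthful R) - Gf (truthful R) (truthful R) = - Lf u.
Proof.
rewrite /Gf !big_bool /pr /prob_h /truthful /Lf /Ah /Bh /Al /Bl /= hsym; ring.
Qed.

Lemma I2 u v : Gf u v - Gf u (truthful R) =
  v.1 * ((qq false false * u.1 + qq false true * u.2) * (Ah - Bh) +
         (qq false false * (1 - u.1) + qq false true * (1 - u.2)) * (Al - Bl)) +
  (1 - v.2) * ((qq false true * u.1 + qq true true * u.2) * (Bh - Ah) +
         (qq false true * (1 - u.1) + qq true true * (1 - u.2)) * (Bl - Al)).
Proof.
rewrite /Gf !big_bool /pr /prob_h /truthful /Ah /Bh /Al /Bl /= hsym; ring.
Qed.

Lemma bound (hq : forall s s', 0 <= qq s s') (hmono : Al - Bl <= Ah - Bh) u v :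
  valid_strategy u -> valid_strategy v ->
  Gf u v - Gf (truthful R) (truthful R) <= - Lf u + Bf v.
Proof.
case=> /andP[u10 u11] /andP[u20 u21] [/andP[v10 v11] /andP[v20 v21]].
have -> : Gf u v - Gf (truthful R) (truthful R) =
  (Gf u v - Gf u (truthful R)) + (Gf u (truthful R) - Gf (truthful R) (truthful R)) by ring.
rewrite I1 I2 /Bf.
set Mh := Num.max (Ah - Bh) 0; set Ml := Num.max (Bl - Al) 0.
have m1 : Ah - Bh <= Mh by rewrite /Mh le_max lexx.
have m2 : Bl - Al <= Ml by rewrite /Ml le_max lexx.
have q00 := hq false false; have q01 := hq false true; have q11 := hq true true.
set ch := qq false false * u.1 + qq false true * u.2.
set cl := qq false false * (1 - u.1) + qq false true * (1 - u.2).
set ch' := qq false true * u.1 + qq true true * u.2.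
set cl' := qq false true * (1 - u.1) + qq true true * (1 - u.2).
have ch0 : 0 <= ch by rewrite /ch addr_ge0 // mulr_ge0.
have cl0 : 0 <= cl by rewrite /cl addr_ge0 // mulr_ge0 // subr_ge0.
have ch0' : 0 <= ch' by rewrite /ch' addr_ge0 // mulr_ge0.
have cl0' : 0 <= cl' by rewrite /cl' addr_ge0 // mulr_ge0 // subr_ge0.
have X1 : ch * (Ah - Bh) + cl * (Al - Bl) <= (qq false false + qq false true) * Mh.
  have a1 := ler_wpM2l ch0 m1.
  have a2 := ler_wpM2l cl0 (le_trans hmono m1).
  have -> : (qq false false + qq false true) * Mh = ch * Mh + cl * Mh by rewrite /ch /cl; ring.
  lra.
have X2 : ch' * (Bh - Ah) + cl' * (Bl - Al) <= (qq false true + qq true true) * Ml.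
  have hm' : Bh - Ah <= Bl - Al by lra.
  have a1 := ler_wpM2l ch0' (le_trans hm' m2).
  have a2 := ler_wpM2l cl0' m2.
  have -> : (qq false true + qq true true) * Ml = ch' * Ml + cl' * Ml by rewrite /ch' /cl'; ring.
  lra.
have b1 := ler_wpM2l v10 X1.
have v2' : 0 <= 1 - v.2 by rewrite subr_ge0.
have b2 := ler_wpM2l v2' X2.
rewrite !mulrA in b1 b2 *.
lra.
Qed.

Lemma sum_neq (f : 'I_n -> R) i : \sum_(j | j != i) f j = \sum_j f j - f i.
Proof. by rewrite [X in _ = X - _](bigD1 i) //=; ring. Qed.

Lemma sum_cst (c : R) : \sum_(j : 'I_n) c = n%:R * c.
Proof. by rewrite sumr_const card_ord mulr_natl. Qed.

Lemma sum_gain (hq : forall s s', 0 <= qq s s') (hmono : Al - Bl <= Ah - Bh)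
   (D : {set 'I_n}) (S' : profile R n) :
  valid_profile S' -> (forall i, i \notin D -> S' i = truthful R) ->
  \sum_(i in D) \sum_(j | j != i) (Gf (S' i) (S' j) - Gf (truthful R) (truthful R)) <=
  \sum_(i in D) ((#|D|%:R - 1) * Bf (S' i) - (n%:R - 1) * Lf (S' i)).
Proof.
move=> hv hout.
apply: le_trans (_ : \sum_(i in D) \sum_(j | j != i)
   (- Lf (S' i) + (j \in D)%:R * Bf (S' j)) <= _).
  apply: ler_sum => i _; apply: ler_sum => j _.
  case jD: (j \in D).
    by rewrite mul1r; apply: bound.
  by rewrite mul0r addr0 (hout j (negbT jD)) I1.
rewrite le_eqVlt; apply/orP; left; apply/eqP.
have e : forall i, i \in D -> \sum_(j | j != i) (- Lf (S' i) + (j \in D)%:R * Bf (S' j)) =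
   - ((n%:R - 1) * Lf (S' i)) + (\sum_(j in D) Bf (S' j) - Bf (S' i)).
  move=> i iD; rewrite sum_neq big_split /= sum_cst iD mul1r.
  rewrite [\sum_(j in D) _]big_mkcond /=.
  have -> : \sum_j (j \in D)%:R * Bf (S' j) = \sum_j (if j \in D then Bf (S' j) else 0).
    by apply: eq_bigr => j _; case: (j \in D); rewrite ?mul1r ?mul0r.
  ring.
rewrite (eq_bigr _ e) big_split /= sumrB sumr_const.
rewrite [RHS]big_split /= !sumrN -!mulr_sumr -mulr_natr; ring.
Qed.

Lemma pure_gain (z : strategy R) (D : {set 'I_n}) i : i \in D ->
  \sum_(j | j != i) (Gf ((fun k => if k \in D then z else truthful R) i)
                        ((fun k => if k \in D then z else truthful R) j)
                     - Gf (truthful R) (truthful R)) =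
  (n%:R - 1) * (Gf z (truthful R) - Gf (truthful R) (truthful R)) +
  (#|D|%:R - 1) * (Gf z z - Gf z (truthful R)).
Proof.
move=> iD; rewrite sum_neq /= iD.
have -> : \sum_j (Gf z (if j \in D then z else truthful R) - Gf (truthful R) (truthful R)) =
  \sum_j ((Gf z (truthful R) - Gf (truthful R) (truthful R)) +
          (if j \in D then Gf z z - Gf z (truthful R) else 0)).
  by apply: eq_bigr => j _; case: (j \in D); ring.
rewrite big_split /= sum_cst -big_mkcond /= sumr_const -mulr_natl; ring.
Qed.

Lemma pureH : Gf (1, 1) (1, 1) - Gf (1, 1) (truthful R) = (qq false false + qq false true) * (Ah - Bh).
Proof. rewrite I2 /=; ring. Qed.
Lemma pureL : Gf (0, 0) (0, 0) - Gf (0, 0) (truthful R) = (qq false true + qq true true) * (Bl - Al).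
Proof. rewrite I2 /=; ring. Qed.

Lemma ind_sum (P : pred (signals n)) : \sum_w Q w * (P w)%:R = \sum_(w | P w) Q w.
Proof. rewrite [RHS]big_mkcond; apply: eq_bigr => w _; case: (P w); rewrite /= ?mulr1 ?mulr0. by []. by []. Qed.

Lemma qq_ge0 s s' : 0 <= qq s s'.
Proof. case: HQ => h0 _ _; apply: sumr_ge0 => w _; exact: h0. Qed.

Lemma qq_sym : qq true false = qq false true.
Proof.
have a10 : agent1 Hn != agent0 Hn by [].
have := sym_pair (fun x y => ((x == false) && (y == true))%:R) a10.
rewrite !ind_sum /qq => <-.
by apply: eq_bigl => w; rewrite andbC.
Qed.

Lemma Pmarg_q s : Pmarg Hn Q s = qq s true + qq s false.
Proof.
rewrite /Pmarg -ind_sum.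
rewrite (pair_expand (fun x y => (x == s)%:R)) !big_bool.
by case: s => /=; rewrite ?mulr1 ?mulr0 ?addr0 ?add0r.
Qed.

Lemma Pdist_q s : Pdist Hn Q s = qq s true / Pmarg Hn Q s.
Proof. by []. Qed.

Lemma util_diff (S' : profile R n) i :
  exante_utility Hn Q PS S' i - exante_utility Hn Q PS (@truthful_profile R n) i =
  (n.-1)%:R^-1 * \sum_(j | j != i) (Gf (S' i) (S' j) - Gf (truthful R) (truthful R)).
Proof. by rewrite !util sumrB mulrBr. Qed.

Lemma cpos : 0 < (n.-1)%:R^-1 :> R.
Proof. by rewrite invr_gt0 ltr0n -ltnS prednK // ltnW. Qed.

Lemma predR : (n.-1)%:R = n%:R - 1 :> R.
Proof. by rewrite -{2}(prednK (ltnW Hn)) mulrSr addrK. Qed.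

Lemma dev (z : strategy R) (d : nat) (k : int) : valid_strategy z -> (0 < d)%N -> (d <= n)%N ->
  d%:Z <= k ->
  0 < (n%:R - 1) * (Gf z (truthful R) - Gf (truthful R) (truthful R)) +
      (d%:R - 1) * (Gf z z - Gf z (truthful R)) ->
  ~ kstrong_eq Hn Q PS (@truthful_profile R n) k.
Proof.
move=> vz d0 dn dk hg H; apply: H.
pose D := [set widen_ord dn x | x : 'I_d].
have cD : #|D| = d.
  rewrite card_imset ?card_ord //.
  by move=> x y /(congr1 val) e; apply: val_inj.
have i0D : widen_ord dn (Ordinal d0) \in D by apply: imset_f.
exists D, (fun k => if k \in D then z else truthful R).
have gain : forall i, i \in D ->
  exante_utility Hn Q PS (fun k => if k \in D then z else truthful R) i -
  exante_utility Hn Q PS (@truthful_profile R n) i > 0.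
  move=> i iD; rewrite util_diff pure_gain // cD.
  by apply: mulr_gt0 => //; apply: cpos.
split.
- by rewrite cD.
- move=> i; case: (i \in D) => //; split; rewrite /is_dist /= ?lexx ?ler01 //.
- by move=> i /negbTE ->.
- by move=> i iD; have := gain i iD; rewrite subr_gt0 => /ltW.
- by exists (widen_ord dn (Ordinal d0)) => //; have := gain _ i0D; rewrite subr_gt0.
Qed.

Lemma main : 
  0 < Pmarg Hn Q false -> 0 < Pmarg Hn Q true ->
  Pcond Hn Q true true > Pcond Hn Q true false ->
  strictly_proper PS ->
  kstrong_eq Hn Q PS (@truthful_profile R n) (kE Hn Q PS) /\
  (forall k : int, kE Hn Q PS < k -> k <= n%:Z ->
     ~ kstrong_eq Hn Q PS (@truthful_profile R n) k).
Proof.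
move=> hl hh hlt sp.
have hq := qq_ge0.
have n0 : (0 < n)%N by apply: ltnW.
have eql : Pmarg Hn Q false = qq false false + qq false true by rewrite Pmarg_q addrC.
have eqh : Pmarg Hn Q true = qq false true + qq true true by rewrite Pmarg_q hsym addrC.
have ePl : (qq false false + qq false true) * Pdist Hn Q false = qq false true.
  by rewrite -eql Pdist_q mulrC divfK // gt_eqF.
have ePh : (qq false true + qq true true) * Pdist Hn Q true = qq true true.
  by rewrite -eqh Pdist_q mulrC divfK // gt_eqF.
have dPl : is_dist (Pdist Hn Q false).
  rewrite /is_dist Pdist_q; apply/andP; split; first by rewrite divr_ge0 // ltW.
  by rewrite ler_pdivrMr // mul1r eql lerDr hq.
have dPh : is_dist (Pdist Hn Q true).
  rewrite /is_dist Pdist_q; apply/andP; split; first by rewrite divr_ge0 // ltW.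
  by rewrite ler_pdivrMr // mul1r eqh lerDr hq.
have hlt' : Pdist Hn Q false < Pdist Hn Q true := hlt.
have sp1 := sp _ _ dPl dPh (negbT (lt_eqF hlt')).
have sp2 := sp _ _ dPh dPl (negbT (gt_eqF hlt')).
rewrite /Exp -/Al -/Bl -/Ah -/Bh in sp1 sp2.
set Dl := Exp (Pdist Hn Q false) (fun s => PS s (Pdist Hn Q false) - PS s (Pdist Hn Q true)).
set Dh := Exp (Pdist Hn Q true) (fun s => PS s (Pdist Hn Q true) - PS s (Pdist Hn Q false)).
have Dl0 : 0 < Dl by rewrite /Dl /Exp -/Al -/Bl -/Ah -/Bh; lra.
have Dh0 : 0 < Dh by rewrite /Dh /Exp -/Al -/Bl -/Ah -/Bh; lra.
have eDl : (qq false false + qq false true) * Dl = qq false true * (Al - Ah) + qq false false * (Bl - Bh).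
  rewrite /Dl /Exp -/Al -/Bl -/Ah -/Bh mulrDr mulrA ePl mulrA.
  rewrite (_ : (qq false false + qq false true) * (1 - Pdist Hn Q false) = qq false false).
    by [].
  by rewrite mulrBr mulr1 ePl; ring.
have eDh : (qq false true + qq true true) * Dh = qq true true * (Ah - Al) + qq false true * (Bh - Bl).
  rewrite /Dh /Exp -/Al -/Bl -/Ah -/Bh mulrDr mulrA ePh mulrA.
  rewrite (_ : (qq false true + qq true true) * (1 - Pdist Hn Q true) = qq false true).
    by [].
  by rewrite mulrBr mulr1 ePh; ring.
have hmono : Al - Bl <= Ah - Bh.
  have : 0 < (Pdist Hn Q true - Pdist Hn Q false) * ((Ah - Bh) - (Al - Bl)).
    have -> : (Pdist Hn Q true - Pdist Hn Q false) * ((Ah - Bh) - (Al - Bl)) =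
      (Pdist Hn Q true * Ah + (1 - Pdist Hn Q true) * Bh - (Pdist Hn Q true * Al + (1 - Pdist Hn Q true) * Bl)) +
      (Pdist Hn Q false * Al + (1 - Pdist Hn Q false) * Bl - (Pdist Hn Q false * Ah + (1 - Pdist Hn Q false) * Bh)) by ring.
    lra.
  rewrite pmulr_rgt0 ?subr_gt0 //; lra.
have qL0 : 0 < qq false false + qq false true by rewrite -eql.
have qH0 : 0 < qq false true + qq true true by rewrite -eqh.
split.
  case=> D [S' [hk hv hout hge [i0 i0D hgt]]].
  have d0 : (0 < #|D|)%N by apply/card_gt0P; exists i0.
  rewrite /kE !le_min in hk; case/andP: hk => hkh /andP[hkl _].
  have k1 := @K1 R n #|D| Ah Bh Dl (qq false false + qq false true) d0 (ltW Dl0) (ltW qL0) n0 hkh.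
  have k2 := @K1 R n #|D| Bl Al Dh (qq false true + qq true true) d0 (ltW Dh0) (ltW qH0) n0 hkl.
  rewrite eDl in k1; rewrite eDh in k2.
  have hsum := sum_gain hq hmono hv hout.
  have hterm : \sum_(i in D) ((#|D|%:R - 1) * Bf (S' i) - (n%:R - 1) * Lf (S' i)) <= 0.
    apply: sumr_le0 => i _.
    case: (hv i) => /andP[u10 u11] /andP[u20 u21].
    have v2 : 0 <= 1 - (S' i).2 by rewrite subr_ge0.
    have -> : (#|D|%:R - 1) * Bf (S' i) - (n%:R - 1) * Lf (S' i) =
      (S' i).1 * ((#|D|%:R - 1) * ((qq false false + qq false true) * Num.max (Ah - Bh) 0) -
         (n%:R - 1) * (qq false true * (Al - Ah) + qq false false * (Bl - Bh))) +
      (1 - (S' i).2) * ((#|D|%:R - 1) * ((qq false true + qq true true) * Num.max (Bl - Al) 0) -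
         (n%:R - 1) * (qq true true * (Ah - Al) + qq false true * (Bh - Bl))).
      by rewrite /Bf /Lf; ring.
    rewrite -oppr_ge0 opprD; apply: addr_ge0; rewrite -mulrN; apply: mulr_ge0 => //;
      rewrite oppr_ge0 subr_le0 //.
  have pos : 0 < \sum_(i in D) (exante_utility Hn Q PS S' i -
                     exante_utility Hn Q PS (@truthful_profile R n) i).
    rewrite (bigD1 i0) //=.
    have h1 : 0 < exante_utility Hn Q PS S' i0 - exante_utility Hn Q PS (@truthful_profile R n) i0.
      by rewrite subr_gt0.
    have h2 : 0 <= \sum_(i in D | i != i0) (exante_utility Hn Q PS S' i -
                     exante_utility Hn Q PS (@truthful_profile R n) i).
      by apply: sumr_ge0 => i /andP[iD _]; rewrite subr_ge0 hge.
    lra.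
  rewrite (eq_bigr _ (fun i _ => util_diff S' i)) -mulr_sumr pmulr_rgt0 ?cpos // in pos.
  have := le_trans hsum hterm; rewrite leNgt pos //.
move=> k hk hkn.
rewrite /kE !gt_min in hk.
case/orP: hk => [hka | /orP[hkb | hnk]]; last by move: hkn; rewrite leNgt hnk.
- move: hka; rewrite /kE_h -/Ah -/Bh.
  case: (ltP Bh Ah) => hAB; last by move=> hnk; move: hkn; rewrite leNgt hnk.
  move=> hka.
  have [d [d0 dZ hd]] := @K2 R n Ah Bh Dl (qq false false + qq false true) hAB (ltW Dl0) qL0 n0.
  rewrite eDl in hd.
  have dk : d%:Z <= k by rewrite dZ lezD1.
  apply: (@dev (1, 1) d k) => //.
  + by split; rewrite /is_dist /= lexx ler01.
  + by rewrite -lez_nat (le_trans dk hkn).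
  + rewrite I1 pureH /Lf /=; lra.
- move: hkb; rewrite /kE_l -/Al -/Bl.
  case: (ltP Al Bl) => hAB; last by move=> hnk; move: hkn; rewrite leNgt hnk.
  move=> hkb.
  have [d [d0 dZ hd]] := @K2 R n Bl Al Dh (qq false true + qq true true) hAB (ltW Dh0) qH0 n0.
  rewrite eDh in hd.
  have dk : d%:Z <= k by rewrite dZ lezD1.
  apply: (@dev (0, 0) d k) => //.
  + by split; rewrite /is_dist /= lexx ler01.
  + by rewrite -lez_nat (le_trans dk hkn).
  + rewrite I1 pureL /Lf /=; lra.
Qed.
End S.

Theorem theorem1 (R : realType) (n : nat) (Hn : (1 < n)%N)
    (Q : signals n -> R) (PS : bool -> R -> R) :
  symmetric_prior Q ->
  0 < Pmarg Hn Q false -> 0 < Pmarg Hn Q true ->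
  Pcond Hn Q true true > Pcond Hn Q true false ->
  0 < Pcond Hn Q true false -> 0 < Pcond Hn Q false true ->
  strictly_proper PS ->
  kstrong_eq Hn Q PS (@truthful_profile R n) (kE Hn Q PS) /\
  (forall k : int, kE Hn Q PS < k -> k <= n%:Z ->
     ~ kstrong_eq Hn Q PS (@truthful_profile R n) k).
Proof.
move=> HQ hl hh hlt _ _ sp.
exact: (main HQ (qq_sym Hn HQ) hl hh hlt sp).
Qed.
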